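(* Let $C$ be a program. Then: (1) (mut) $\mathsf{ert}[\![\langle e\rangle:=e']\!]([e\mapsto e'])\preceq[e\mapsto -]$; (2) (lkp) $\mathsf{ert}[\![x:=\langle e\rangle]\!]\big([x=z\wedge\mathsf{emp}]\oplus[e[x/y]\mapsto z]\big)\preceq[x=y\wedge\mathsf{emp}]\oplus[e\mapsto z]$; (3) (alc) if $x$ does not occur in $e$, then $\mathsf{ert}[\![x:=\mathtt{alloc}(e)]\!]\big(\bigoplus_{i=1}^{e}[x+i-1\mapsto 0]\big)\preceq[\mathsf{emp}]$; (4) (aux) for all $f,g\in\mathbb{T}$ and every variable $y$ not occurring in $C$: $\mathsf{ert}[\![C]\!](f)\preceq g$ implies $\mathsf{ert}[\![C]\!](\inf y\colon f)\preceq\inf y\colon g$.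
   Context: States and programs. Fix a finite set $\mathrm{Vars}$ of variables; values are $\mathbb{N}$, locations are $\mathbb{N}_{>0}$. A stack is $s\colon \mathrm{Vars}\to\mathbb{N}$; a heap is a partial map $h$ from a finite set $\mathrm{dom}(h)\subseteq\mathbb{N}_{>0}$ to $\mathbb{N}$. $h_1\perp h_2$ means disjoint domains; then $h_1\star h_2$ is their union; $h_\emptyset$ is the empty heap. $\mathsf{States}$ is the set of pairs $(s,h)$. $s(e)$ is the value of a (heap-independent) arithmetic expression $e$ under $s$, $s\models\varphi$ means the Boolean expression $\varphi$ holds under $s$, $s[x\mapsto v]$ is the updated stack; $e[x/y]$ is syntactic substitution of variable $y$ for $x$ in $e$. Programs are generated by $C ::= \mathtt{tick}(e) \mid x:=e \mid x:=\mathtt{alloc}(e) \mid \langle e\rangle:=e' \mid x:=\langle e\rangle \mid \mathtt{free}(e) \mid \{C\}[p]\{C\} \mid \mathtt{if}(\varphi)\{C\}\mathtt{else}\{C\} \mid C;C \mid \mathtt{while}(\varphi)\{C\}$, where $p$ is an expression with $s(p)\in[0,1]\cap\mathbb{Q}$ for all $s$. Runtimes. $\mathbb{T}$ is the set of functions $\mathsf{States}\to[0,\infty]$, ordered pointwise by $\preceq$; arithmetic is pointwise with $0\cdot\infty=0$. $[\varphi]$ is the $0/1$-valued Iverson bracket. Truncated subtraction: $a\dot- b=\max(a-b,0)$, $\infty\dot- b=\infty$ for finite $b$, $a\dot-\infty=0$. $(f\oplus g)(s,h)=\min\{f(s,h_1)+g(s,h_2)\mid h=h_1\star h_2\}$;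 $(f \mathbin{-\!\!\ominus} g)(s,h)=\sup\{g(s,h\star h')\dot- f(s,h')\mid h'\perp h\}$; $(\inf y\colon f)(s,h)=\inf_{v\in\mathbb{N}} f(s[y\mapsto v],h)$, $(\sup y\colon f)(s,h)=\sup_{v\in\mathbb{N}}f(s[y\mapsto v],h)$; $f[x/e](s,h)=f(s[x\mapsto s(e)],h)$. Atomic ($0/\infty$-valued) runtimes: $[\mathsf{emp}](s,h)=0$ if $h=h_\emptyset$, else $\infty$; $[\varphi\wedge\mathsf{emp}](s,h)=0$ if $s\models\varphi$ and $h=h_\emptyset$, else $\infty$; $\mathsf{tm}(e)(s,h)=s(e)$ if $h=h_\emptyset$, else $\infty$; $[e\mapsto e'](s,h)=0$ if $\mathrm{dom}(h)=\{s(e)\}$ and $h(s(e))=s(e')$, else $\infty$; $[e\mapsto -](s,h)=0$ if $\mathrm{dom}(h)=\{s(e)\}$, else $\infty$; $\bigoplus_{i=1}^{e} f_i$ is evaluated at $(s,h)$ as the separating sum over $i=1,\dots,s(e)$ (empty one: $[\mathsf{emp}]$). Expected runtime transformer $\mathsf{ert}[\![C]\!]\colon\mathbb{T}\to\mathbb{T}$ (with $v$ fresh): $\mathsf{ert}[\![\mathtt{tick}(e)]\!](f)=\mathsf{tm}(e)\oplus f$; $\mathsf{ert}[\![x:=e]\!](f)=f[x/e]$; $\mathsf{ert}[\![x:=\mathtt{alloc}(e)]\!](f)=\sup v\colon (\bigoplus_{i=1}^{e}[v+i-1\mapsto 0])\mathbin{-\!\!\ominus} f[x/v]$; $\mathsf{ert}[\![\langle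 e\rangle:=e']\!](f)=[e\mapsto-]\oplus([e\mapsto e']\mathbin{-\!\!\ominus} f)$; $\mathsf{ert}[\![x:=\langle e\rangle]\!](f)=\inf v\colon [e\mapsto v]\oplus([e\mapsto v]\mathbin{-\!\!\ominus} f[x/v])$; $\mathsf{ert}[\![\mathtt{free}(e)]\!](f)=[e\mapsto-]\oplus f$; $\mathsf{ert}[\![C_1;C_2]\!](f)=\mathsf{ert}[\![C_1]\!](\mathsf{ert}[\![C_2]\!](f))$; conditional: $[\varphi]\cdot\mathsf{ert}[\![C_1]\!](f)+[\neg\varphi]\cdot\mathsf{ert}[\![C_2]\!](f)$; probabilistic choice: $p\cdot\mathsf{ert}[\![C_1]\!](f)+(1-p)\cdot\mathsf{ert}[\![C_2]\!](f)$; $\mathsf{ert}[\![\mathtt{while}(\varphi)\{C\}]\!](f)=\mathrm{lfp}\, g.\ [\neg\varphi]\cdot f+[\varphi]\cdot\mathsf{ert}[\![C]\!](g)$ (least fixed point in $(\mathbb{T},\preceq)$). *)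

(* Defs.v *)
(* Runtimes take values in \bar R
   (extended reals over an arbitrary realType R), restricted to [0, +oo]. *)
From HB Require Import structures.
From mathcomp Require Import all_boot all_order all_algebra.
From mathcomp Require Import finmap.
From mathcomp Require Import all_classical all_reals.
From mathcomp Require Import ereal.

Set Implicit Arguments.
Unset Strict Implicit.
Unset Printing Implicit Defensive.
Import Order.TTheory GRing.Theory Num.Theory.

Local Open Scope ring_scope.
Local Open Scope ereal_scope.

Section HeapLang.
Context {R : realType} {V : finType}.

Definition stack := V -> nat.

(* a heap: finite partial map from locations (positive naturals) to values *)
Record heap := Heap { hmap :> {fmap nat -> nat} ; hvalid : 0%N \notin domf hmap }.

Definition state := (stack * heap)%type.

(* runtimes: the elements of T are the runtimes with values in [0, +oo] *)
Definition runtime := state -> \bar R.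
Definition is_runtime (f : runtime) : Prop := forall st, 0 <= f st.

Definition rle (f g : runtime) : Prop := forall st, f st <= g st.

Definition upd (s : stack) (x : V) (v : nat) : stack :=
  fun y => if y == x then v else s y.

(* (heap-independent) expressions, given by their semantics *)
Definition aexp := stack -> nat.
Definition bexp := stack -> bool.
Record pexp := PExp {
  pval : stack -> rat ;
  pval_ge0 : forall s, (0 <= pval s)%R ;
  pval_le1 : forall s, (pval s <= 1)%R }.

(* "y does not occur in e" for expressions: e does not depend on y *)
Definition indep {T : Type} (y : V) (e : stack -> T) : Prop :=
  forall s v, e (upd s y v) = e s.

Definition subst (e : aexp) (x y : V) : aexp := fun s => e (upd s x (s y)).

Definition hsplit (h h1 h2 : heap) : Prop :=
  [disjoint domf (hmap h1) & domf (hmap h2)]%fset /\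
  hmap h = catf (hmap h1) (hmap h2).

Definition tsub (a b : \bar R) : \bar R :=
  if b == +oo then 0 else maxe (a - b) 0.

Definition oplus (f g : runtime) : runtime := fun st =>
  ereal_inf [set r | exists h1 h2 : heap,
     hsplit st.2 h1 h2 /\ r = f (st.1, h1) + g (st.1, h2)].

Definition wand (f g : runtime) : runtime := fun st =>
  ereal_sup [set r | exists h' hu : heap,
     hsplit hu st.2 h' /\ r = tsub (g (st.1, hu)) (f (st.1, h'))].

Definition inf_var (y : V) (f : runtime) : runtime := fun st =>
  ereal_inf (range (fun v : nat => f (upd st.1 y v, st.2))).
Definition sup_var (y : V) (f : runtime) : runtime := fun st =>
  ereal_sup (range (fun v : nat => f (upd st.1 y v, st.2))).

Definition emp : runtime := fun st =>
  if domf (hmap st.2) == fset0 then 0 else +oo.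
Definition emp_and (phi : bexp) : runtime := fun st =>
  if phi st.1 && (domf (hmap st.2) == fset0) then 0 else +oo.
Definition tm (e : aexp) : runtime := fun st =>
  if domf (hmap st.2) == fset0 then ((e st.1)%:R)%:E else +oo.
Definition pt (e e' : aexp) : runtime := fun st =>
  if (domf (hmap st.2) == [fset e st.1]%fset) &&
     (fnd (hmap st.2) (e st.1) == Some (e' st.1)) then 0 else +oo.
Definition ptany (e : aexp) : runtime := fun st =>
  if domf (hmap st.2) == [fset e st.1]%fset then 0 else +oo.

Fixpoint itsep (k : nat) (F : nat -> runtime) : runtime :=
  match k with
  | 0 => emp
  | k'.+1 => oplus (itsep k' F) (F k'.+1)
  end.
Definition bigsep (e : aexp) (F : nat -> runtime) : runtime := fun st =>
  itsep (e st.1) F st.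

Definition iv (b : bool) : \bar R := if b then 1 else 0.

(* least fixed point in (T, ⪯) of a monotone map: the pointwise infimum of
   all pre-fixed points in T (Knaster--Tarski) *)
Definition lfp (Phi : runtime -> runtime) : runtime := fun st =>
  ereal_inf [set g st | g in [set g : runtime | is_runtime g /\ rle (Phi g) g]].

End HeapLang.

Arguments heap : clear implicits.
Arguments state : clear implicits.
Arguments runtime : clear implicits.
Arguments stack : clear implicits.
Arguments aexp : clear implicits.
Arguments bexp : clear implicits.
Arguments pexp : clear implicits.

Section Programs.
Context {V : finType}.

Inductive prog :=
| Tick of aexp V
| Assign of V & aexp V
| Alloc of V & aexp V
| Mut of aexp V & aexp V
| Lookup of V & aexp V
| Free of aexp V
| PChoice of prog & pexp V & prog
| Ite of bexp V & prog & prog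
| Seq of prog & prog
| While of bexp V & prog.

Fixpoint notin_prog (y : V) (C : prog) : Prop :=
  match C with
  | Tick e => indep y e
  | Assign x e => x <> y /\ indep y e
  | Alloc x e => x <> y /\ indep y e
  | Mut e e' => indep y e /\ indep y e'
  | Lookup x e => x <> y /\ indep y e
  | Free e => indep y e
  | PChoice C1 p C2 => notin_prog y C1 /\ indep y (pval p) /\ notin_prog y C2
  | Ite b C1 C2 => indep y b /\ notin_prog y C1 /\ notin_prog y C2
  | Seq C1 C2 => notin_prog y C1 /\ notin_prog y C2
  | While b C1 => indep y b /\ notin_prog y C1
  end.

End Programs.

Arguments prog : clear implicits.

Section ERT.
Context {R : realType} {V : finType}.

Fixpoint ert (C : prog V) (f : runtime R V) : runtime R V :=
  match C with
  | Tick e => oplus (tm e) f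
  | Assign x e => fun st => f (upd st.1 x (e st.1), st.2)
  | Alloc x e => fun st =>
      ereal_sup (range (fun v : nat =>
        wand (bigsep e (fun i => pt (fun _ => (v + i - 1)%N) (fun _ => 0%N)))
             (fun st' => f (upd st'.1 x v, st'.2)) st))
  | Mut e e' => oplus (ptany e) (wand (pt e e') f)
  | Lookup x e => fun st =>
      ereal_inf (range (fun v : nat =>
        oplus (pt e (fun _ => v))
              (wand (pt e (fun _ => v)) (fun st' => f (upd st'.1 x v, st'.2))) st))
  | Free e => oplus (ptany e) f
  | PChoice C1 p C2 => fun st =>
      (ratr (pval p st.1))%:E * ert C1 f st
      + (1 - ratr (pval p st.1))%:E * ert C2 f st
  | Ite b C1 C2 => fun st =>
      iv (b st.1) * ert C1 f st + iv (~~ b st.1) * ert C2 f st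
  | Seq C1 C2 => ert C1 (ert C2 f)
  | While b C1 =>
      lfp (fun g st => iv (~~ b st.1) * f st + iv (b st.1) * ert C1 g st)
  end.

End ERT.

(* Main.v *)
Require Import Defs.
From HB Require Import structures.
From mathcomp Require Import all_boot all_order all_algebra.
From mathcomp Require Import finmap.
From mathcomp Require Import all_classical all_reals.
From mathcomp Require Import ereal.
Set Implicit Arguments.
Unset Strict Implicit.
Unset Printing Implicit Defensive.
Import Order.TTheory GRing.Theory Num.Theory.
Local Open Scope ring_scope.
Local Open Scope ereal_scope.

Lemma upd_same (V : finType) (s : stack V) x v : upd s x v x = v.
Proof. by rewrite /upd eqxx. Qed.

Lemma upd_comm (V : finType) (s : stack V) x y a b : x <> y ->
  upd (upd s x a) y b = upd (upd s y b) x a.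
Proof.
move=> xy; apply/funext => z; rewrite /upd.
case: (eqVneq z y) => [->|] //; case: (eqVneq y x) => // yx.
by case: xy; rewrite yx.
Qed.

Lemma upd_upd_id (V : finType) (s : stack V) x a : upd (upd s x a) x (s x) = s.
Proof. by apply/funext => z; rewrite /upd; case: (eqVneq z x) => [->|]. Qed.

Lemma heap_eq (h1 h2 : heap) : hmap h1 = hmap h2 -> h1 = h2.
Proof.
case: h1 h2 => m1 p1 [m2 p2] /= E; subst m2; congr Heap; apply: bool_irrelevance.
Qed.

Lemma hemp_valid : 0%N \notin domf ([fmap]%fmap : {fmap nat -> nat}).
Proof. by rewrite domf0. Qed.

Definition hemp : heap := Heap hemp_valid.

Lemma hsplit_l0 h : hsplit h h hemp.
Proof. by split; [exact: fdisjointX0 | rewrite /= catf0]. Qed.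

Lemma hsplit_0r h : hsplit h hemp h.
Proof. by split; [exact: fdisjoint0X | rewrite /= cat0f]. Qed.

Lemma hsplit_0 hu h : hsplit hu hemp h -> hu = h.
Proof. by move=> [_ E]; apply: heap_eq; rewrite E /= cat0f. Qed.

Lemma dom0_hemp h : domf (hmap h) = fset0 -> h = hemp.
Proof. by move=> /fmap_nil E; apply: heap_eq. Qed.

Lemma le_of_eq (R : realType) (a b : \bar R) : a = b -> a <= b.
Proof. by move->. Qed.

Lemma tsub_aa (R : realType) (a : \bar R) : tsub a a = 0.
Proof.
rewrite /tsub; case: eqP => // ane.
case: a ane => [r| |] ane.
- by rewrite subee // maxxx.
- by case: ane.
- by rewrite /= maxNye.
Qed.

Lemma tsub_le (R : realType) (a b c : \bar R) : a <= b -> tsub a c <= tsub b c.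
Proof.
move=> ab; rewrite /tsub; case: ifP => // _.
by rewrite ge_max !le_max lexx orbT andbT (leeD ab (lexx _)).
Qed.

Lemma oplus_ext (R : realType) (V : finType) (F1 F2 G1 G2 : runtime R V) s1 s2 h :
  (forall h, F1 (s1,h) = F2 (s2,h)) -> (forall h, G1 (s1,h) = G2 (s2,h)) ->
  oplus F1 G1 (s1,h) = oplus F2 G2 (s2,h).
Proof.
move=> EF EG; rewrite /oplus /=; congr ereal_inf; apply/seteqP; split=> r /=.
  by move=> [h1 [h2 [Hs ->]]]; exists h1, h2; rewrite EF EG.
by move=> [h1 [h2 [Hs ->]]]; exists h1, h2; rewrite EF EG.
Qed.

Lemma wand_ext (R : realType) (V : finType) (F1 F2 G1 G2 : runtime R V) s1 s2 h :
  (forall h, F1 (s1,h) = F2 (s2,h)) -> (forall h, G1 (s1,h) = G2 (s2,h)) ->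
  wand F1 G1 (s1,h) = wand F2 G2 (s2,h).
Proof.
move=> EF EG; rewrite /wand /=; congr ereal_sup; apply/seteqP; split=> r /=.
  by move=> [h1 [h2 [Hs ->]]]; exists h1, h2; rewrite EF EG.
by move=> [h1 [h2 [Hs ->]]]; exists h1, h2; rewrite EF EG.
Qed.

Lemma oplus_le (R : realType) (V : finType) (F G1 G2 : runtime R V) s h :
  (forall h, G1 (s,h) <= G2 (s,h)) -> oplus F G1 (s,h) <= oplus F G2 (s,h).
Proof.
move=> HG; apply/ereal_infP => r [h1 [h2 [Hs ->]]].
apply: le_trans (leeD (lexx _) (HG h2)).
by apply: ereal_inf_lbound; exists h1, h2.
Qed.

Lemma wand_le (R : realType) (V : finType) (F G1 G2 : runtime R V) s h :
  (forall h, G1 (s,h) <= G2 (s,h)) -> wand F G1 (s,h) <= wand F G2 (s,h).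
Proof.
move=> HG; apply/ereal_supP => r [h1 [h2 [Hs ->]]].
rewrite /=; apply: (le_trans (tsub_le _ (HG h2))).
by apply: ereal_sup_ubound; exists h1, h2.
Qed.

Lemma itsep_ext (R : realType) (V : finType) k (F1 F2 : nat -> runtime R V) s1 s2 :
  (forall i h, F1 i (s1,h) = F2 i (s2,h)) -> forall h, itsep k F1 (s1,h) = itsep k F2 (s2,h).
Proof.
move=> EF; elim: k => [|k IH] h //=.
by apply: oplus_ext.
Qed.

Lemma sup_ub (R : realType) (S : set (\bar R)) x y : S y -> x <= y -> x <= ereal_sup S.
Proof. by move=> Sy xy; apply: le_trans xy _; apply: ereal_sup_ubound. Qed.

Lemma inf_lb (R : realType) (S : set (\bar R)) x y : S y -> y <= x -> ereal_inf S <= x.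
Proof. by move=> Sy xy; apply: le_trans _ xy; apply: ereal_inf_lbound. Qed.

Lemma iv_ge0 (R : realType) b : (0 : \bar R) <= iv b.
Proof. by case: b; rewrite /iv. Qed.

Lemma p_ge0 (R : realType) (V : finType) (p : pexp V) s : (0 : \bar R) <= (ratr (pval p s))%:E.
Proof. by rewrite lee_fin ler0q pval_ge0. Qed.

Lemma q_ge0 (R : realType) (V : finType) (p : pexp V) s : (0 : \bar R) <= (1 - ratr (pval p s))%:E.
Proof. by rewrite lee_fin subr_ge0 -(rmorph1 (ratr : rat -> R)) ler_rat pval_le1. Qed.

Lemma ert_mono (R : realType) (V : finType) (C : prog V) :
  forall f g : runtime R V, rle f g -> rle (ert C f) (ert C g).
Proof.
elim: C => [e|x e|x e|e e'|x e|e|C1 IH1 p C2 IH2|b C1 IH1 C2 IH2|C1 IH1 C2 IH2|b C1 IH1]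
  f g fg [s h] /=.
- by apply: oplus_le => h'; apply: fg.
- by apply: fg.
- apply/ereal_supP => r [v _ <-].
  apply: sup_ub; first by exists v.
  by apply: wand_le => h'; apply: fg.
- by apply: oplus_le => h'; apply: wand_le => h''; apply: fg.
- apply/ereal_infP => r [v _ <-].
  apply: inf_lb; first by exists v.
  by apply: oplus_le => h'; apply: wand_le => h''; apply: fg.
- by apply: oplus_le => h'; apply: fg.
- by apply: leeD; apply: lee_wpmul2l; rewrite ?p_ge0 ?q_ge0 //; [apply: IH1 | apply: IH2].
- by apply: leeD; apply: lee_wpmul2l; rewrite ?iv_ge0 //; [apply: IH1 | apply: IH2].
- by apply: IH1; apply: IH2.
- apply: le_ereal_inf => r [k [kr Hk] <-]; exists k => //; split => // st'.
  apply: le_trans (Hk st'); apply: leeD; last exact: lexx.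
  by apply: lee_wpmul2l; [exact: iv_ge0 | apply: fg].
Qed.

Lemma ert_shift (R : realType) (V : finType) (C : prog V) (y : V) :
  notin_prog y C -> forall (f : runtime R V) v s h,
  ert C (fun st => f (upd st.1 y v, st.2)) (s,h) <= ert C f (upd s y v, h).
Proof.
elim: C => [e|x e|x e|e e'|x e|e|C1 IH1 p C2 IH2|b C1 IH1 C2 IH2|C1 IH1 C2 IH2|b C1 IH1]
  /= nC f v s h.
- apply: le_of_eq; apply: oplus_ext => // h'; by rewrite /tm /= nC.
- by case: nC => xy He; rewrite He upd_comm.
- case: nC => xy He; apply: le_of_eq; congr ereal_sup; congr image; apply/funext => w.
  apply: wand_ext => h'.
    by rewrite /bigsep /= He; apply: itsep_ext => i h0.
  by rewrite upd_comm.
- case: nC => He He'; apply: le_of_eq; apply: oplus_ext => h'.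
    by rewrite /ptany /= He.
  by apply: wand_ext => h'' //; rewrite /pt /= He He'.
- case: nC => xy He; apply: le_of_eq; congr ereal_inf; congr image; apply/funext => w.
  apply: oplus_ext => h'; first by rewrite /pt /= He.
  apply: wand_ext => h''; first by rewrite /pt /= He.
  by rewrite upd_comm.
- apply: le_of_eq; apply: oplus_ext => // h'; by rewrite /ptany /= nC.
- case: nC => n1 [hp n2]; rewrite hp.
  by apply: leeD; apply: lee_wpmul2l; rewrite ?p_ge0 ?q_ge0 //; [apply: IH1 | apply: IH2].
- case: nC => hb [n1 n2]; rewrite hb.
  by apply: leeD; apply: lee_wpmul2l; rewrite ?iv_ge0 //; [apply: IH1 | apply: IH2].
- case: nC => n1 n2.
  apply: le_trans (IH1 n1 (ert C2 f) v s h).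
  by apply: ert_mono => -[s' h']; apply: IH2.
- case: nC => hb n1.
  apply/ereal_infP => r [g [gr Hg] <-].
  apply: ereal_inf_lbound; exists (fun st => g (upd st.1 y v, st.2)) => //.
  split; first by move=> st; apply: gr.
  move=> [s' h'] /=; apply: le_trans (Hg (upd s' y v, h')); rewrite /= hb.
  apply: leeD; first exact: lexx.
  by apply: lee_wpmul2l; [exact: iv_ge0 | apply: IH1].
Qed.

Theorem mainTheorem10 (R : realType) (V : finType) :
  (* (1) mut *)
  (forall e e' : aexp V,
     rle (ert (Mut e e') (pt e e' : runtime R V)) (ptany e)) /\
  (* (2) lkp *)
  (forall (x y z : V) (e : aexp V), x <> y ->
     rle (ert (Lookup x e)
            (oplus (emp_and (fun s => s x == s z))
                   (pt (subst e x y) (fun s => s z)) : runtime R V))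
         (oplus (emp_and (fun s => s x == s y)) (pt e (fun s => s z)))) /\
  (* (3) alc *)
  (forall (x : V) (e : aexp V), indep x e ->
     rle (ert (Alloc x e)
            (bigsep e (fun i => pt (fun s => (s x + i - 1)%N) (fun _ => 0%N))
               : runtime R V))
         emp) /\
  (* (4) aux *)
  (forall (C : prog V) (f g : runtime R V) (y : V),
     is_runtime f -> is_runtime g -> notin_prog y C ->
     rle (ert C f) g -> rle (ert C (inf_var y f)) (inf_var y g)).
Proof.
split; [|split; [|split]].
- move=> e e' [s h] /=.
  rewrite {2}/ptany /=; case: ifP => hd; last by rewrite leey.
  apply: (@inf_lb _ _ _ (ptany e (s,h) + wand (pt e e') (pt e e') (s,hemp))).
    by exists h, hemp; split => //; exact: hsplit_l0.
  rewrite {1}/ptany /= hd add0e.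
  apply/ereal_supP => r' [h' [hu [Hs ->]]].
  by rewrite (hsplit_0 Hs) tsub_aa.
- move=> x y z e xy [s h].
  apply/ereal_infP => r [h1 [h2 [Hs ->]]].
  rewrite /emp_and /=; case: ifP => [/andP [/eqP sxy /eqP d1]|_]; last first.
    by rewrite /pt; case: ifP => _; rewrite leey.
  rewrite /pt /=; case: ifP => [/andP [/eqP d2 /eqP f2]|_]; last by rewrite leey.
  have hh : h = h2.
    by case: Hs => _ E; apply: heap_eq; rewrite E (fmap_nil d1) cat0f.
  subst h2.
  apply: (@inf_lb _ _ _ (oplus (pt e (fun _ => s z))
     (wand (pt e (fun _ => s z))
        (fun st' => oplus (emp_and (fun s => s x == s z))
                   (pt (subst e x y) (fun s => s z)) (upd st'.1 x (s z), st'.2))) (s,h))).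
    by exists (s z).
  apply: (@inf_lb _ _ _ (pt e (fun _ => s z) (s,h) + wand (pt e (fun _ => s z))
        (fun st' => oplus (emp_and (fun s => s x == s z))
                   (pt (subst e x y) (fun s => s z)) (upd st'.1 x (s z), st'.2)) (s,hemp))).
    by exists h, hemp; split => //; exact: hsplit_l0.
  rewrite {1}/pt /= f2 d2 !eqxx /= add0e adde0.
  apply/ereal_supP => r' [h' [hu [Hs' ->]]].
  rewrite (hsplit_0 Hs') /tsub.
  case: ifP => //= ptinf.
  move: ptinf; rewrite /pt /=; case: ifP => [/andP [/eqP d' /eqP f'] _|]; last by rewrite eqxx.
  rewrite sube0 ge_max lexx andbT.
  apply: (@inf_lb _ _ _ (emp_and (fun s => s x == s z) (upd s x (s z), hemp) +
                         pt (subst e x y) (fun s => s z) (upd s x (s z), h'))).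
    by exists hemp, h'; split => //; exact: hsplit_0r.
  have E2 : upd s x (s z) z = s z by rewrite /upd; case: ifP => // /eqP ->.
  have E1 : subst e x y (upd s x (s z)) = e s.
    rewrite /subst /upd; case: eqP => [/esym //|_].
    by rewrite -sxy; congr e; apply/funext => w; case: eqP => [->|]...
  rewrite /emp_and /pt /= E1 E2 f' d' upd_same !eqxx /=.
  by rewrite adde0.
- move=> x e He [s h].
  rewrite /emp /=; case: ifP => [/eqP d|_]; last by rewrite leey.
  have -> : h = hemp by exact: dom0_hemp.
  apply/ereal_supP => r [v _ <-].
  apply/ereal_supP => r' [h' [hu [Hs ->]]].
  rewrite (hsplit_0 Hs) /bigsep /= He.
  rewrite (@itsep_ext _ _ _ _ (fun i => pt (fun _ => (v + i - 1)%N) (fun _ => 0%N)) _ s).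
    by rewrite tsub_aa.
  by move=> i h0; rewrite /pt /= upd_same.
- move=> C f g y _ _ nC Hfg [s h].
  apply/ereal_infP => r [v _ <-].
  apply: le_trans (Hfg _).
  apply: le_trans (ert_shift nC f v s h).
  apply: ert_mono => -[s' h'].
  by apply: inf_lb; first by exists v.
Qed.
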